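(* Let $p$ be an odd prime and $\chi\ne1$ a Dirichlet character with odd conductor $f_\chi$ such that $p^2\nmid f_\chi$. Write $$\ell_{p,E}(s,\chi)=a_0-a_1(s-1)+a_2(s-1)^2-\cdots .$$ Then $|a_0|_p\le1$ and $p\mid a_n$ (i.e. $|a_n|_p\le|p|_p$) for all $n\geq1$.
   Context: Set $\chi(a)=0$ if $\gcd(a,f_\chi)>1$. Let $\omega$ be the Teichmüller character mod $p$ and $\langle a\rangle=\omega^{-1}(a)a$ for $a\in\mathbb Z_p^\times$. The $p$-adic Euler $\ell$-function is the $p$-adic analytic function $\ell_{p,E}(s,\chi)=\lim_{N\to\infty}\sum_{a=1,\,p\nmid a}^{f_\chi p^N}(-1)^a\chi(a)\langle a\rangle^{1-s}$, whose expansion about $s=1$ is as displayed, with coefficients $a_n\in\mathbb Q_p(\chi)$. *)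

(* Defs.v *)
From HB Require Import structures.
From mathcomp Require Import all_boot all_order all_algebra.
From mathcomp Require Import boolp classical_sets reals.
Set Implicit Arguments. Unset Strict Implicit. Unset Printing Implicit Defensive.
Import Order.TTheory GRing.Theory Num.Theory.
Local Open Scope ring_scope.

Section PadicDefs.
Variables (R : realType) (K : fieldType) (nrm : K -> R).

Definition cvgK (u : nat -> K) (l : K) : Prop :=
  forall e : R, 0 < e -> exists N : nat, forall n : nat, (N <= n)%N -> nrm (u n - l) < e.

Definition cauchyK (u : nat -> K) : Prop :=
  forall e : R, 0 < e -> exists N : nat, forall m n : nat,
    (N <= m)%N -> (N <= n)%N -> nrm (u m - u n) < e.

(* (K, nrm) is a complete non-archimedean valued field whose absolute value
   restricts to |.|_p on Q, normalized by |p|_p = 1/p.  Such a K contains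
   (a copy of) Q_p(chi) for the values of chi, with the same absolute value. *)
Definition padic_abs (p : nat) : Prop :=
  [/\ nrm 0 = 0 /\ (forall x, x != 0 -> 0 < nrm x),
      forall x y, nrm (x * y) = nrm x * nrm y,
      forall x y, nrm (x + y) <= Num.max (nrm x) (nrm y),
      nrm (p%:R) = (p%:R)^-1
    & forall u, cauchyK u -> exists l, cvgK u l].

(* limit of a sequence (default 0 if it does not converge) *)
Definition limK (u : nat -> K) : K := xget 0 [set l | cvgK u l].

Definition in_Zp (s : K) : Prop := exists u : nat -> int, cvgK (fun n => (u n)%:~R) s.

Definition logK (u : K) : K :=
  limK (fun n => \sum_(1 <= k < n.+1) (-1) ^+ k.+1 * (u - 1) ^+ k / k%:R).

Definition expK (z : K) : K :=
  limK (fun n => \sum_(k < n) z ^+ k / (k`!)%:R).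

(* u^x := exp(x log u), for u a principal unit *)
Definition cpowK (u x : K) : K := expK (x * logK u).

End PadicDefs.

Definition dirichlet_char (K : fieldType) (f : nat) (chi : nat -> K) : Prop :=
  [/\ (0 < f)%N, chi 1%N = 1,
      forall a b : nat, chi (a * b)%N = chi a * chi b,
      forall a : nat, chi (a + f)%N = chi a
    & forall a : nat, (chi a == 0) = ~~ coprime a f].

(* f is the conductor: chi is not induced from any proper modulus d | f *)
Definition primitive_char (K : fieldType) (f : nat) (chi : nat -> K) : Prop :=
  forall d : nat, (d %| f)%N -> (d < f)%N ->
    exists a b : nat, [/\ coprime a f, coprime b f, (a = b %[mod d])%N & chi a != chi b].

Definition nontrivial_char (K : fieldType) (f : nat) (chi : nat -> K) : Prop :=
  exists a : nat, coprime a f /\ chi a != 1.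

Definition teichmuller (R : realType) (K : fieldType) (nrm : K -> R)
    (p : nat) (omega : nat -> K) : Prop :=
  forall a : nat, ~~ (p %| a)%N -> omega a ^+ p.-1 = 1 /\ nrm (omega a - a%:R) < 1.

Definition angle (K : fieldType) (omega : nat -> K) (a : nat) : K :=
  (omega a)^-1 * a%:R.

(* N-th partial sum defining l_{p,E}(s,chi) *)
Definition ellE_partial (R : realType) (K : fieldType) (nrm : K -> R)
    (p f : nat) (chi omega : nat -> K) (s : K) (N : nat) : K :=
  \sum_(1 <= a < (f * p ^ N).+1 | ~~ (p %| a)%N)
     (-1) ^+ a * chi a * cpowK nrm (angle omega a) (1 - s).

(* Main.v *)
Require Import Defs.
From HB Require Import structures.
From mathcomp Require Import all_boot all_order all_algebra.
From mathcomp Require Import boolp classical_sets reals.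
From mathcomp Require Import cyclic zify ring lra.
Set Implicit Arguments. Unset Strict Implicit. Unset Printing Implicit Defensive.
Import Order.TTheory GRing.Theory Num.Theory.
Lemma lognfact p k : prime p -> logn p k`! = k %/ p + logn p (k %/ p)`!.
Proof.
move=> pp; have p0 := prime_gt0 pp.
elim: k => [|k IH]; first by rewrite div0n.
rewrite factS lognM ?fact_gt0 // IH divnS //.
have [dv|ndv] := boolP (p %| k.+1); last first.
  by rewrite /= logn_coprime ?prime_coprime.
have [c E] := dvdnP dv.
have c0 : (0 < c)%N by have : (0 < k.+1)%N by []; rewrite E muln_gt0 => /andP[].
rewrite E.
have cd : c = (k %/ p).+1.
  by have := divnS k p0; rewrite dv E mulnK // add1n.
rewrite lognM // (logn_prime p pp) eqxx add1n factS lognM ?fact_gt0 // -cd.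
rewrite /=; lia.

Qed.

Lemma lognfact_le p k : prime p -> (p.-1 * logn p k`! <= k)%N.
Proof.
move=> pp; have p1 := prime_gt1 pp.
elim: k {-2}k (leqnn k) => [|n IH] k kn.
  by move: kn; rewrite leqn0 => /eqP ->; rewrite fact0 logn1 muln0.
case: k kn => [|k] kn; first by rewrite fact0 logn1 muln0.
rewrite lognfact // mulnDr.
have hq : (k.+1 %/ p < k.+1)%N by rewrite ltn_Pdiv.
have := IH (k.+1 %/ p) (leq_trans (hq : (k.+1 %/ p).+1 <= k.+1) kn).
have := leq_divM k.+1 p.
set d := k.+1 %/ p; set v := logn p d`!.
have : p = p.-1.+1 by rewrite prednK // ltnW.
move: (p.-1) => pm ->; nia.
Qed.

Lemma lognfact_le2 p k : prime p -> odd p -> (2 * logn p k`! <= k)%N.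
Proof.
move=> pp op; apply: leq_trans (lognfact_le k pp); apply: leq_mul => //.
have := prime_gt1 pp; case: p pp op => [|[|[|n]]] //.
Qed.

Local Open Scope ring_scope.

Section Norm.
Variables (R : realType) (K : fieldType) (nrm : K -> R) (p : nat).
Hypothesis Hp : prime p.
Hypothesis Hodd : odd p.
Hypothesis Habs : padic_abs nrm p.

Lemma n0 : nrm 0 = 0. Proof. by move: Habs => [[h _] _ _ _ _]. Qed.
Lemma npos x : x != 0 -> 0 < nrm x. Proof. by move: Habs => [[_ h] _ _ _ _]; apply: h. Qed.
Lemma nM x y : nrm (x * y) = nrm x * nrm y. Proof. by move: Habs => [_ h _ _ _]. Qed.
Lemma nD x y : nrm (x + y) <= Num.max (nrm x) (nrm y). Proof. by move: Habs => [_ _ h _ _]. Qed.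
Lemma np : nrm (p%:R) = (p%:R)^-1. Proof. by move: Habs => [_ _ _ h _]. Qed.
Lemma ncompl u : cauchyK nrm u -> exists l, cvgK nrm u l. Proof. by move: Habs => [_ _ _ _ h]; apply: h. Qed.

Lemma nge0 x : 0 <= nrm x.
Proof. by have [->|/npos/ltW//] := eqVneq x 0; rewrite n0. Qed.

Lemma n1 : nrm 1 = 1.
Proof.
have h : nrm 1 = nrm 1 * nrm 1 by rewrite -nM mulr1.
have p1 : 0 < nrm 1 by apply: npos; exact: oner_neq0.
by apply: (mulfI (lt0r_neq0 p1)); rewrite -h mulr1.
Qed.

Lemma nX x n : nrm (x ^+ n) = nrm x ^+ n.
Proof. by elim: n => [|n IH]; rewrite ?expr0 ?n1 // !exprS nM IH. Qed.

Lemma nN1 : nrm (-1) = 1.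
Proof.
have h : nrm (-1) ^+ 2 = 1 by rewrite -nX sqrrN expr1n n1.
by apply/eqP; rewrite -(pexpr_eq1 (n:=2)) ?h ?nge0.
Qed.

Lemma nN x : nrm (- x) = nrm x.
Proof. by rewrite -mulN1r nM nN1 mul1r. Qed.

Lemma nB x y : nrm (x - y) = nrm (y - x).
Proof. by rewrite -nN opprB. Qed.

Lemma nV x : nrm (x^-1) = (nrm x)^-1.
Proof.
have [->|nz] := eqVneq x 0; first by rewrite invr0 n0 invr0.
have h : nrm x * nrm x^-1 = 1 by rewrite -nM mulfV // n1.
have nz' : nrm x != 0 by rewrite lt0r_neq0 // npos.
by apply: (mulfI nz'); rewrite h mulfV.
Qed.

Lemma nDle x y c : nrm x <= c -> nrm y <= c -> nrm (x + y) <= c.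
Proof. by move=> hx hy; apply: le_trans (nD x y) _; rewrite ge_max hx hy. Qed.

Lemma nDlt x y c : nrm x < c -> nrm y < c -> nrm (x + y) < c.
Proof. by move=> hx hy; apply: le_lt_trans (nD x y) _; rewrite gt_max hx hy. Qed.

Lemma nBle x y c : nrm x <= c -> nrm y <= c -> nrm (x - y) <= c.
Proof. by move=> hx hy; apply: nDle; rewrite ?nN. Qed.

Lemma nBlt x y c : nrm x < c -> nrm y < c -> nrm (x - y) < c.
Proof. by move=> hx hy; apply: nDlt; rewrite ?nN. Qed.

Lemma nsum_le (I : Type) (r : seq I) (P : pred I) (F : I -> K) c :
  0 <= c -> (forall i, P i -> nrm (F i) <= c) -> nrm (\sum_(i <- r | P i) F i) <= c.
Proof.
move=> c0 h; elim/big_rec: _ => [|i x Pi hx]; first by rewrite n0.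
by apply: nDle => //; apply: h.
Qed.

Lemma nsum_lt (I : Type) (r : seq I) (P : pred I) (F : I -> K) c :
  0 < c -> (forall i, P i -> nrm (F i) < c) -> nrm (\sum_(i <- r | P i) F i) < c.
Proof.
move=> c0 h; elim/big_rec: _ => [|i x Pi hx]; first by rewrite n0.
by apply: nDlt => //; apply: h.
Qed.

Lemma n_dom x y : nrm y < nrm x -> nrm (x + y) = nrm x.
Proof.
move=> h; apply/eqP; rewrite eq_le; apply/andP; split.
  by apply: nDle => //; apply: ltW.
have := nD (x + y) (- y); rewrite addrK nN.
rewrite le_max => /orP[//|hy]; by have := lt_le_trans h hy; rewrite ltxx.
Qed.

Lemma nnat_le1 n : nrm (n%:R) <= 1.
Proof.
elim: n => [|n IH]; first by rewrite n0.
by rewrite -addn1 natrD; apply: nDle => //; rewrite n1.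
Qed.

Lemma nint_le1 (z : int) : nrm (z%:~R) <= 1.
Proof. by case: z => n; rewrite ?NegzE ?mulrNz ?nN nnat_le1. Qed.


Definition q := nrm (p%:R).
Lemma p_gt1 : (1 < p)%N. Proof. exact: prime_gt1. Qed.
Lemma p_gt2 : (2 < p)%N.
Proof. have := p_gt1; case: p Hodd => [|[|[|n]]] //. Qed.
Lemma pR_gt1 : 1 < (p%:R : R). Proof. by rewrite ltr1n p_gt1. Qed.
Lemma q_gt0 : 0 < q.
Proof. by rewrite /q np invr_gt0 (lt_trans ltr01 pR_gt1). Qed.
Lemma q_lt1 : q < 1.
Proof. by rewrite /q np invf_lt1 ?pR_gt1 // (lt_trans ltr01 pR_gt1). Qed.
Lemma q_ge0 : 0 <= q. Proof. exact: ltW q_gt0. Qed.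
Lemma q_le1 : q <= 1. Proof. exact: ltW q_lt1. Qed.

Lemma nmulp m : nrm ((m * p)%:R) <= q.
Proof. by rewrite natrM nM -[X in _ <= X]mul1r ler_wpM2r ?nge0 ?nnat_le1. Qed.

Lemma ncoprime m : coprime m p -> nrm (m%:R) = 1.
Proof.
move=> cmp.
have e := Euler_exp_totient cmp; rewrite totient_prime // (modn_small p_gt1) in e.
set Q := (m ^ p.-1 %/ p)%N.
have e2 : (m ^ p.-1 = Q * p + 1)%N.
  by rewrite {1}(divn_eq (m ^ p.-1) p) e.
have h1 : (1 : K) = (m%:R) ^+ p.-1 - ((Q * p)%:R).
  by rewrite -natrX e2 natrD [_ + 1]addrC addrK.
have hge : 1 <= nrm (m%:R) ^+ p.-1.
  rewrite -nX; have := nD ((m%:R : K) ^+ p.-1) (- ((Q * p)%:R)).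
  rewrite -h1 n1 nN le_max => /orP[//|h].
  by have := le_lt_trans (le_trans h (nmulp _)) q_lt1; rewrite ltxx.
have hle : nrm (m%:R) ^+ p.-1 <= 1 by rewrite exprn_ile1 ?nge0 ?nnat_le1.
have : nrm (m%:R : K) ^+ p.-1 == 1 by rewrite eq_le hle hge.
have pp : (0 < p.-1)%N by rewrite -ltnS prednK ?prime_gt0 // p_gt1.
by rewrite pexpr_eq1 ?nge0 // => /eqP.
Qed.

Lemma nnat n : (0 < n)%N -> nrm (n%:R) = q ^+ logn p n.
Proof.
move=> n0; have [m cm E] := pfactor_coprime Hp n0.
by rewrite [in LHS]E natrM nM ncoprime 1?coprime_sym // mul1r natrX nX.
Qed.


Lemma cvg_ext u v l : (forall n, u n = v n) -> cvgK nrm u l -> cvgK nrm v l.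
Proof. by move=> e h x x0; have [N hN] := h x x0; exists N => n nN; rewrite -e hN. Qed.

Lemma cvg_const c : cvgK nrm (fun _ => c) c.
Proof. by move=> e e0; exists 0%N => n _; rewrite subrr n0. Qed.

Lemma cvg_add u v l1 l2 : cvgK nrm u l1 -> cvgK nrm v l2 ->
  cvgK nrm (fun n => u n + v n) (l1 + l2).
Proof.
move=> h1 h2 e e0; have [N1 hN1] := h1 e e0; have [N2 hN2] := h2 e e0.
exists (maxn N1 N2) => n; rewrite geq_max => /andP[a b].
by rewrite opprD addrACA; apply: nDlt; [apply: hN1|apply: hN2].
Qed.

Lemma cvg_opp u l : cvgK nrm u l -> cvgK nrm (fun n => - u n) (- l).
Proof. by move=> h e e0; have [N hN] := h e e0; exists N => n hn; rewrite -opprD nN hN. Qed.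

Lemma cvg_sub u v l1 l2 : cvgK nrm u l1 -> cvgK nrm v l2 ->
  cvgK nrm (fun n => u n - v n) (l1 - l2).
Proof. by move=> h1 h2; apply: cvg_add => //; apply: cvg_opp. Qed.

Lemma cvg_scale w u l : cvgK nrm u l -> cvgK nrm (fun n => w * u n) (w * l).
Proof.
move=> h e e0.
have w1 : 0 < nrm w + 1 by rewrite ltr_wpDl ?nge0.
have [N hN] := h (e / (nrm w + 1)) (divr_gt0 e0 w1); exists N => n hn.
rewrite -mulrBr nM; apply: (le_lt_trans (y := (nrm w + 1) * nrm (u n - l))).
  by rewrite ler_wpM2r ?nge0 // lerDl.
by rewrite -ltr_pdivlMl // mulrC hN.
Qed.

Lemma cvg_sum (I : Type) (r : seq I) (P : pred I) (u : I -> nat -> K) (l : I -> K) :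
  (forall i, P i -> cvgK nrm (u i) (l i)) ->
  cvgK nrm (fun n => \sum_(i <- r | P i) u i n) (\sum_(i <- r | P i) l i).
Proof.
move=> h; elim: r => [|i r IH].
  by rewrite big_nil; apply: cvg_ext (cvg_const 0) => n; rewrite big_nil.
rewrite big_cons; case: (boolP (P i)) => Pi.
  by apply: cvg_ext (cvg_add (h i Pi) IH) => n; rewrite big_cons Pi.
by apply: cvg_ext IH => n; rewrite big_cons (negbTE Pi).
Qed.

Lemma cvg_le u l c : cvgK nrm u l -> 0 <= c ->
  (exists N0, forall n, (N0 <= n)%N -> nrm (u n) <= c) -> nrm l <= c.
Proof.
move=> h c0 [N0 hN0]; rewrite leNgt; apply/negP => lc.
have e0 : 0 < nrm l - c by rewrite subr_gt0.
have [N hN] := h (nrm l - c) e0.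
have := nD (u (maxn N N0)) (- (u (maxn N N0) - l)).
rewrite opprB addrC subrK nB le_max => /orP[] hh.
  have := hN0 (maxn N N0) (leq_maxr _ _); move=> /(le_trans hh).
  by rewrite leNgt lc.
have := hN (maxn N N0) (leq_maxl _ _); move=> /(le_lt_trans hh).
move=> hh2; lra.
Qed.


Lemma q_small e : 0 < e -> exists j, q ^+ j < e.
Proof.
move=> e0; exists (Num.bound e^-1).
have he : 0 <= e^-1 by rewrite invr_ge0 ltW.
have hb := archi_boundP he.
set j := Num.bound e^-1 in hb *.
have hj : (j < p ^ j)%N by apply: ltn_expl; exact: p_gt1.
have pj : e^-1 < (p ^ j)%:R.
  by apply: lt_trans hb _; rewrite ltr_nat.
have pj0 : 0 < ((p ^ j)%:R : R) by apply: lt_trans pj; rewrite invr_gt0.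
rewrite /q np exprVn -natrX -[e]invrK ltf_pV2 ?posrE ?invr_gt0 //.
Qed.

Lemma qX_le m n : (m <= n)%N -> q ^+ n <= q ^+ m.
Proof. by move=> mn; rewrite ler_wiXn2l ?q_ge0 ?q_le1. Qed.

Lemma pow_div_le z n d : (0 < d)%N -> (logn p d <= n)%N -> nrm z <= q ->
  nrm (z ^+ n / d%:R) <= q ^+ (n - logn p d).
Proof.
move=> d0 vn zq; rewrite nM nV nX nnat //.
have qv : 0 < q ^+ logn p d by rewrite exprn_gt0 ?q_gt0.
rewrite ler_pdivrMr // -exprD subnK //.
by rewrite lerXn2r ?nge0 ?q_ge0 // nnegrE ?nge0 ?q_ge0.
Qed.

Lemma cauchy_series (tau : nat -> K) :
  (forall e, 0 < e -> exists N, forall k, (N <= k)%N -> nrm (tau k) < e) ->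
  cauchyK nrm (fun n => \sum_(k < n) tau k).
Proof.
move=> h e e0; have [N hN] := h e e0; exists N.
suff H : forall m n, (N <= m)%N -> (N <= n)%N -> (m <= n)%N ->
    nrm (\sum_(k < m) tau k - \sum_(k < n) tau k) < e.
  move=> m n hm hn; case: (leqP m n) => mn; first exact: H.
  by rewrite nB; apply: H => //; apply: ltnW.
move=> m n hm hn mn.
rewrite nB -!(big_mkord xpredT) (big_cat_nat (leq0n m) mn) /= addrAC subrr add0r.
rewrite big_nat_cond; apply: nsum_lt => // i /andP[/andP[mi _] _].
by apply: hN; apply: leq_trans mi.
Qed.

Lemma limK_le u c : 0 <= c -> (forall n, nrm (u n) <= c) -> nrm (limK nrm u) <= c.
Proof.
move=> c0 h; rewrite /limK; case: xgetP => [l _ hl|_]; last by rewrite n0.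
by apply: cvg_le hl c0 _; exists 0%N => n _.
Qed.

Lemma exp_cvg z : nrm z <= q ->
  cvgK nrm (fun n => \sum_(k < n) z ^+ k / (k`!)%:R) (expK nrm z).
Proof.
move=> zq.
have hc : cauchyK nrm (fun n => \sum_(k < n) z ^+ k / (k`!)%:R).
  apply: (@cauchy_series (fun k => z ^+ k / (k`!)%:R)) => e e0; have [j hj] := q_small e0.
  exists (2 * j)%N => k kj.
  have v2 := lognfact_le2 k Hp Hodd.
  have hv : (logn p k`! <= k)%N by lia.
  apply: le_lt_trans (pow_div_le (fact_gt0 k) hv zq) _.
  by apply: le_lt_trans (qX_le _) hj; lia.
have [l hl] := ncompl hc.
by rewrite /expK /limK; apply: (xgetPex 0 (P := [set l | cvgK nrm _ l])); exists l.
Qed.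

Lemma logn_lt p' k : (1 < p')%N -> (0 < k)%N -> (logn p' k < k)%N.
Proof.
move=> p1 k0; rewrite -(ltn_exp2l _ _ p1); apply: leq_ltn_trans (ltn_expl _ p1).
by apply: dvdn_leq k0 (pfactor_dvdnn p' k).
Qed.

Lemma log_le u : nrm (u - 1) <= q -> nrm (logK nrm u) <= q.
Proof.
move=> uq; apply: limK_le; first exact: q_ge0.
move=> n; rewrite big_nat_cond; apply: nsum_le; first exact: q_ge0.
move=> k /andP[/andP[k1 _] _]; rewrite -mulrA nM nX nN1 expr1n mul1r.
apply: le_trans (pow_div_le k1 (ltnW (logn_lt p_gt1 k1)) uq) _.
rewrite -[X in _ <= X]expr1; apply: qX_le.
by have := logn_lt p_gt1 k1; lia.
Qed.


Lemma fermat_dec m : coprime m p -> exists Q, (m ^ p.-1 = Q * p + 1)%N.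
Proof.
move=> cmp; have e := Euler_exp_totient cmp; rewrite totient_prime // (modn_small p_gt1) in e.
by exists (m ^ p.-1 %/ p)%N; rewrite {1}(divn_eq (m ^ p.-1) p) e.
Qed.

Lemma Xdiff x y n : nrm x <= 1 -> nrm y <= 1 -> nrm (x ^+ n - y ^+ n) <= nrm (x - y).
Proof.
move=> hx hy; elim: n => [|n IH]; first by rewrite !expr0 subrr n0 nge0.
have -> : x ^+ n.+1 - y ^+ n.+1 = x * (x ^+ n - y ^+ n) + (x - y) * y ^+ n.
  by rewrite !exprS; ring.
apply: nDle; rewrite nM.
  by apply: le_trans IH; rewrite ler_piMl ?nge0.
by rewrite nX ler_piMr ?nge0 // exprn_ile1 ?nge0.
Qed.

Lemma teich_bound omega a : teichmuller nrm p omega -> ~~ (p %| a)%N ->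
  nrm (angle omega a - 1) <= q.
Proof.
move=> T pa; have [h1 h2] := T a pa; set w := omega a in h1 h2 *.
set n := p.-1.
have n0' : (0 < n)%N by rewrite /n -ltnS prednK ?prime_gt0 // p_gt1.
have w0 : w != 0.
  by apply/eqP => w0; move/eqP: h1; rewrite w0 expr0n gtn_eqF //= eq_sym oner_eq0.
have nw : nrm w = 1.
  apply/eqP; rewrite -(pexpr_eq1 (n:=n)) ?nge0 //; by rewrite -nX h1 n1.
have cap : coprime a p by rewrite coprime_sym prime_coprime.
set A : K := a%:R.
have nA : nrm A = 1 by apply: ncoprime.
have -> : angle omega a - 1 = w^-1 * (A - w) by rewrite /angle mulrBr mulVf.
rewrite nM nV nw invr1 mul1r.
set r := nrm (A - w).
have r1 : r < 1 by rewrite /r nB.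
set S := \sum_(i < n) A ^+ (n.-1 - i) * w ^+ i.
have hS : A ^+ n - w ^+ n = (A - w) * S by rewrite subrXX.
have hE : nrm (S - n%:R * A ^+ n.-1) <= r.
  have -> : S - n%:R * A ^+ n.-1 = \sum_(i < n) A ^+ (n.-1 - i) * (w ^+ i - A ^+ i).
    have -> : n%:R * A ^+ n.-1 = \sum_(i < n) A ^+ n.-1.
      by rewrite sumr_const card_ord mulr_natl.
    rewrite /S -sumrB.
    apply: eq_bigr => i _; rewrite mulrBr -exprD subnK //.
    by rewrite -ltnS prednK.
  apply: nsum_le; first exact: nge0.
  move=> i _; rewrite nM; apply: le_trans (_ : 1 * r <= r); last by rewrite mul1r.
  apply: ler_pM; rewrite ?nge0 //; first by rewrite nX nA expr1n.
  by rewrite /r nB; apply: Xdiff; rewrite ?nA ?nw.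
have nn : nrm (n%:R * A ^+ n.-1) = 1.
  rewrite nM nX nA expr1n mulr1 ncoprime // coprime_sym prime_coprime //.
  by rewrite gtnNdvd // /n prednK ?prime_gt0.
have nS : nrm S = 1.
  have -> : S = n%:R * A ^+ n.-1 + (S - n%:R * A ^+ n.-1) by rewrite addrC subrK.
  by rewrite n_dom nn //; apply: le_lt_trans hE _.
have [Q hQ] := fermat_dec cap.
have : nrm (A ^+ n - w ^+ n) <= q.
  by rewrite h1 -natrX hQ natrD addrK nmulp.
by rewrite hS nM nS mulr1.
Qed.


Lemma chi_le1 f chi a : dirichlet_char f chi -> nrm (chi a) <= 1.
Proof.
move=> [f0 c1 cM cP c0].
have cmod : forall x, chi x = chi (x %% f)%N.
  move=> x; rewrite {1}(divn_eq x f); elim: (x %/ f)%N => [|k IH]; first by rewrite mul0n add0n.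
  have -> : (k.+1 * f + x %% f = (k * f + x %% f) + f)%N by rewrite mulSn; lia.
  by rewrite cP.
have cX : forall x n, chi (x ^ n)%N = chi x ^+ n.
  by move=> x; elim=> [|n IH]; rewrite ?expn0 ?expr0 // expnS exprS cM IH.
case: (boolP (coprime a f)) => ca; last first.
  by move: (c0 a); rewrite ca => /eqP ->; rewrite n0 ler01.
have e := Euler_exp_totient ca.
have h : chi a ^+ totient f = 1 by rewrite -cX cmod e -cmod.
have t0 : (0 < totient f)%N by rewrite totient_gt0.
have : nrm (chi a) ^+ totient f == 1 by rewrite -nX h n1.
by rewrite pexpr_eq1 ?nge0 // => /eqP ->.
Qed.

Lemma eventually_all (c : nat -> nat -> K) k :
  (forall j, (j < k)%N -> cvgK nrm (fun N => c N j) 0) ->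
  forall e, 0 < e -> exists N0, forall N, (N0 <= N)%N -> forall j, (j < k)%N -> nrm (c N j) < e.
Proof.
elim: k => [|k IH] H e e0; first by exists 0%N.
have [N1 h1] := IH (fun j jk => H j (ltnW jk)) e e0.
have [N2 h2] := H k (ltnSn k) e e0.
exists (maxn N1 N2) => N; rewrite geq_max => /andP[a b] j; rewrite ltnS leq_eqVlt.
case/orP => [/eqP ->|jk]; last exact: h1.
by have := h2 N b; rewrite subr0.
Qed.

Lemma extract (c : nat -> nat -> K) (C : R) (x : nat -> K) :
  0 < C -> (forall N j, nrm (c N j) <= C) ->
  (forall e, 0 < e -> exists m, [/\ 0 < nrm (x m), nrm (x m) <= 1 & nrm (x m) < e]) ->
  (forall m, exists D : nat -> K,
     (forall N, cvgK nrm (fun n => \sum_(j < n) c N j * x m ^+ j) (D N)) /\ cvgK nrm D 0) ->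
  forall k, cvgK nrm (fun N => c N k) 0.
Proof.
move=> C0 hC hx hD; elim/ltn_ind => k IH e e0.
have [m [r0 r1 re]] := hx (e / C) (divr_gt0 e0 C0).
set r := nrm (x m) in r0 r1 re.
have [D [hDN hD0]] := hD m.
have rk0 : 0 < r ^+ k by rewrite exprn_gt0.
have ep0 : 0 < e * r ^+ k by rewrite mulr_gt0.
have [N1 h1] := hD0 _ ep0.
have [N2 h2] := eventually_all IH ep0.
exists (maxn N1 N2) => N; rewrite geq_max => /andP[a b]; rewrite subr0.
set T := D N - \sum_(j < k.+1) c N j * x m ^+ j.
have hT : nrm T <= C * r ^+ k.+1.
  apply: cvg_le (cvg_sub (hDN N) (cvg_const (\sum_(j < k.+1) c N j * x m ^+ j))) _ _.
    by rewrite mulr_ge0 ?exprn_ge0 ?ltW.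
  exists k.+1 => n hn /=.
  rewrite -!(big_mkord xpredT (fun j => c N j * x m ^+ j)) (big_cat_nat (leq0n k.+1) hn) /= addrAC subrr add0r.
  rewrite big_nat_cond; apply: nsum_le; first by rewrite mulr_ge0 ?exprn_ge0 ?ltW.
  move=> j /andP[/andP[kj _] _]; rewrite nM nX.
  apply: ler_pM; [exact: nge0|exact: exprn_ge0 (nge0 _)|exact: hC|].
  exact: (ler_wiXn2l (ltW r0) r1 kj).
have eq1 : c N k * x m ^+ k = (D N - \sum_(j < k) c N j * x m ^+ j) - T.
  by rewrite /T big_ord_recr /=; ring.
have hlt : nrm (c N k * x m ^+ k) < e * r ^+ k.
  rewrite eq1; apply: nBlt; first apply: nBlt.
  - by have := h1 N a; rewrite subr0.
  - apply: nsum_lt => // j _; rewrite nM nX.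
    apply: le_lt_trans (h2 N b j (ltn_ord j)).
    by apply: ler_piMr; [exact: nge0|exact: exprn_ile1 (nge0 _) r1].
  - apply: le_lt_trans hT _; rewrite exprS mulrA ltr_pM2r //.
    by rewrite -ltr_pdivlMl // mulrC.
by move: hlt; rewrite nM nX ltr_pM2r.
Qed.


Lemma bound_prefix (a : nat -> K) N : exists M, 1 <= M /\ forall k, (k < N)%N -> nrm (a k) <= M.
Proof.
elim: N => [|N [M [M1 hM]]]; first by exists 1.
exists (Num.max M (nrm (a N))); split; first by rewrite le_max M1.
move=> k; rewrite ltnS leq_eqVlt => /orP[/eqP ->|kN]; first by rewrite le_max lexx orbT.
by rewrite le_max hM.
Qed.

Lemma main_core (f : nat) (chi omega : nat -> K) (a : nat -> K) :
  teichmuller nrm p omega ->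
  dirichlet_char f chi ->
  (forall s : K, in_Zp nrm s ->
     exists L : K,
       cvgK nrm (fun N => ellE_partial nrm p f chi omega s N) L /\
       cvgK nrm (fun n => \sum_(k < n) a k * (1 - s) ^+ k) L) ->
  nrm (a 0%N) <= 1 /\ (forall n : nat, (1 <= n)%N -> nrm (a n) <= nrm (p%:R : K)).
Proof.
move=> T D H.
pose wa a := (-1) ^+ a * chi a.
pose La a := logK nrm (angle omega a).
pose B N k := \sum_(1 <= a < (f * p ^ N).+1 | ~~ (p %| a)%N) wa a * (La a ^+ k / (k`!)%:R).
have hL : forall a, ~~ (p %| a)%N -> nrm (La a) <= q.
  by move=> b pb; apply: log_le; apply: teich_bound.
have hw : forall b, nrm (wa b) <= 1.
  by move=> b; rewrite nM nX nN1 expr1n mul1r; apply: chi_le1 D.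
have hB : forall N k, nrm (B N k) <= q ^+ (k - logn p k`!).
  move=> N k; apply: nsum_le; first by rewrite exprn_ge0 ?q_ge0.
  move=> b pb; rewrite nM -[X in _ <= X]mul1r; apply: ler_pM; rewrite ?nge0 //.
  apply: pow_div_le; [exact: fact_gt0| |exact: hL].
  by have := lognfact_le2 k Hp Hodd; lia.
have hB1 : forall N k, nrm (B N k) <= 1.
  by move=> N k; apply: le_trans (hB N k) _; rewrite exprn_ile1 ?q_ge0 ?q_le1.
have hBp : forall N k, (1 <= k)%N -> nrm (B N k) <= q.
  move=> N k k1; apply: le_trans (hB N k) _; rewrite -[X in _ <= X]expr1; apply: qX_le.
  by have := lognfact_le2 k Hp Hodd; lia.
have G : forall s N, nrm (1 - s) <= 1 ->
    cvgK nrm (fun n => \sum_(k < n) B N k * (1 - s) ^+ k) (ellE_partial nrm p f chi omega s N).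
  move=> s N hs; rewrite /ellE_partial /cpowK.
  have h := @cvg_sum _ (index_iota 1 (f * p ^ N).+1) (fun b => ~~ (p %| b)%N)
    (fun b n => wa b * \sum_(k < n) ((1 - s) * La b) ^+ k / (k`!)%:R)
    (fun b => wa b * expK nrm ((1 - s) * La b)).
  apply: cvg_ext (h _) => [n|b pb]; last first.
    apply: cvg_scale; apply: exp_cvg; rewrite nM -[q]mul1r.
    by apply: ler_pM; rewrite ?nge0 //; apply: hL.
  rewrite /B.
  under [RHS]eq_bigr do rewrite mulr_suml.
  rewrite exchange_big /=; apply: eq_bigr => b pb; rewrite mulr_sumr.
  by apply: eq_bigr => k _; rewrite exprMn; ring.
have [L0 [_ hS]] : exists L : K,
    cvgK nrm (fun N => ellE_partial nrm p f chi omega 0 N) L /\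
    cvgK nrm (fun n => \sum_(k < n) a k * (1 - 0) ^+ k) L.
  apply: H; exists (fun _ => 0%:Z) => e e0; exists 0%N => n _.
  by rewrite mulr0z subrr n0.
have [M [M1 hM]] : exists M, 1 <= M /\ forall k, nrm (a k) <= M.
  have [N hN] := hS 1 ltr01.
  have [M [M1 hM]] := bound_prefix a N.
  exists M; split => // k; case: (ltnP k N) => kN; first exact: hM.
  apply: le_trans M1; apply: ltW.
  have -> : a k = (\sum_(j < k.+1) a j * (1 - 0) ^+ j - L0) - (\sum_(j < k) a j * (1 - 0) ^+ j - L0).
    by rewrite big_ord_recr /= subr0 expr1n mulr1; ring.
  by apply: nBlt; apply: hN => //; apply: leqW.
pose x m : K := p%:R ^+ m.
have hx : forall m, nrm (x m) = q ^+ m by move=> m; rewrite nX.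
have E := @extract (fun N k => a k - B N k) M x (lt_le_trans ltr01 M1).
have {}E : forall k, cvgK nrm (fun N => a k - B N k) 0.
  apply: E.
  - by move=> N j; apply: nBle => //; apply: le_trans M1.
  - move=> e e0; have [m hm] := q_small e0; exists m; rewrite hx; split => //.
      by rewrite exprn_gt0 ?q_gt0.
    by rewrite exprn_ile1 ?q_ge0 ?q_le1.
  move=> m; pose s := 1 - x m.
  have ts : 1 - s = x m by rewrite /s; ring.
  have [L [h1 h2]] : exists L : K,
      cvgK nrm (fun N => ellE_partial nrm p f chi omega s N) L /\
      cvgK nrm (fun n => \sum_(k < n) a k * (1 - s) ^+ k) L.
    apply: H; exists (fun _ => 1 - (p ^ m)%:Z) => e e0; exists 0%N => n _.
    by rewrite intrB /= -pmulrn natrX /s subrr n0.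
  exists (fun N => L - ellE_partial nrm p f chi omega s N); split.
    move=> N; have hG := G s N; rewrite ts hx in hG.
    have := cvg_sub h2 (hG (exprn_ile1 _ q_ge0 q_le1)).
    apply: cvg_ext => n; rewrite ts -sumrB; apply: eq_bigr => j _; by rewrite mulrBl.
  move=> e e0; have [N hN] := h1 e e0; exists N => n nN.
  by rewrite subr0 nB; apply: hN.
have lim_bound : forall k c, 0 <= c -> (forall N, nrm (B N k) <= c) -> nrm (a k) <= c.
  move=> k c c0 hc; apply: (@cvg_le (fun N => B N k)) c0 _; last by exists 0%N => n _.
  move=> e e0; have [N hN] := E k e e0; exists N => n nN.
  by rewrite nB -[_ - _]subr0; apply: hN.
split; first by apply: lim_bound => //; exact: ler01.
by move=> n n1; apply: lim_bound; [exact: q_ge0|move=> N; apply: hBp].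
Qed.

End Norm.


Theorem corollary3p7 (R : realType) (K : fieldType) (nrm : K -> R)
    (p f : nat) (chi omega : nat -> K) (a : nat -> K) :
  prime p -> odd p ->
  padic_abs nrm p ->
  teichmuller nrm p omega ->
  dirichlet_char f chi -> primitive_char f chi -> nontrivial_char f chi ->
  odd f -> ~~ (p ^ 2 %| f)%N ->
  (* l_{p,E}(s,chi) = a_0 - a_1 (s-1) + a_2 (s-1)^2 - ... for s in Z_p *)
  (forall s : K, in_Zp nrm s ->
     exists L : K,
       cvgK nrm (fun N => ellE_partial nrm p f chi omega s N) L /\
       cvgK nrm (fun n => \sum_(k < n) a k * (1 - s) ^+ k) L) ->
  nrm (a 0%N) <= 1 /\ (forall n : nat, (1 <= n)%N -> nrm (a n) <= nrm (p%:R : K)).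
Proof.
move=> Hp Hodd Habs T D _ _ _ _ H.
exact: (main_core Hp Hodd Habs T D H).
Qed.
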